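(* If $n$ and $r$ are positive integers with $n\ge 2r+2$, then $$\rho_2(K(n+1,r+1))\ \ge\ \rho_2(K(n,r)).$$
   Context: For integers $n\ge 2r$, the Kneser graph $K(n,r)$ has as vertices the $r$-element subsets of $[n]=\{1,\dots,n\}$, two vertices being adjacent iff they are disjoint. A $2$-packing of a graph $G$ is a set of vertices pairwise at distance at least $3$ in $G$; $\rho_2(G)$ is the maximum cardinality of a $2$-packing. *)

(* Defs.v *)
From mathcomp Require Import all_boot.
Set Implicit Arguments. Unset Strict Implicit. Unset Printing Implicit Defensive.

Definition kneser_vertex (n r : nat) (u : {set 'I_n}) : bool := #|u| == r.

Definition kneser_adj (n r : nat) (u v : {set 'I_n}) : bool :=
  [&& kneser_vertex r u, kneser_vertex r v & [disjoint u & v]].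

Definition kneser_dist_le2 (n r : nat) (u v : {set 'I_n}) : bool :=
  [|| u == v, kneser_adj r u v
    | [exists w : {set 'I_n}, kneser_adj r u w && kneser_adj r w v]].

Definition two_packing (n r : nat) (P : {set {set 'I_n}}) : bool :=
  [forall u in P, kneser_vertex r u] &&
  [forall u in P, forall v in P, (u != v) ==> ~~ kneser_dist_le2 r u v].

Definition rho2 (n r : nat) : nat :=
  \max_(P : {set {set 'I_n}} | two_packing r P) #|P|.

(* Main.v *)
Require Import Defs.
From mathcomp Require Import all_boot.
Set Implicit Arguments. Unset Strict Implicit. Unset Printing Implicit Defensive.

Section Aux.
Variable n : nat.
Let W := widen_ord (leqnSn n).

Lemma W_inj : injective W.
Proof. by move=> a b /(congr1 val) /= /val_inj. Qed.

Lemma maxW (i : 'I_n) : (ord_max == W i) = false.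
Proof. by apply/negbTE; apply/eqP => /(congr1 val) /= E; move: (ltn_ord i); rewrite -E ltnn. Qed.

Definition fext (u : {set 'I_n}) : {set 'I_n.+1} := ord_max |: (W @: u).

Lemma notin_img (u : {set 'I_n}) : ord_max \notin (W @: u).
Proof. by apply/imsetP => -[i _ /eqP]; rewrite maxW. Qed.

Lemma card_fext u : #|fext u| = #|u|.+1.
Proof. by rewrite /fext cardsU1 notin_img card_imset //; apply: W_inj. Qed.

Lemma mem_fext u : ord_max \in fext u.
Proof. by rewrite /fext setU11. Qed.

Lemma in_fextW u i : (W i \in fext u) = (i \in u).
Proof.
rewrite /fext in_setU1 eq_sym maxW /=.
by rewrite (mem_imset _ _ W_inj).
Qed.

Lemma fext_inj : injective fext.
Proof.
move=> u v E; apply/setP => i; by rewrite -!(in_fextW _ i) E.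
Qed.

Lemma key r (u v : {set 'I_n}) :
  kneser_vertex r u -> kneser_vertex r v ->
  kneser_dist_le2 r.+1 (fext u) (fext v) -> kneser_dist_le2 r u v.
Proof.
move=> Hu Hv; case/or3P.
- by move/eqP/fext_inj => ->; rewrite /kneser_dist_le2 eqxx.
- case/and3P => _ _ /disjoint_setI0 /setP /(_ ord_max).
  by rewrite inE !mem_fext inE.
case/existsP => w /andP [/and3P [_ Hw D1] /and3P [_ _ D2]].
have wmax : ord_max \notin w.
  apply/negP => Hm; move: D1; rewrite disjoint_sym => /disjointFr /(_ Hm).
  by rewrite mem_fext.
set w' := [set i : 'I_n | W i \in w].
have Ew : W @: w' = w.
  apply/setP => j; apply/imsetP/idP.
    by case=> i; rewrite inE => Hi ->.
  move=> Hj; have jn : j < n.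
    rewrite ltn_neqAle -ltnS ltn_ord andbT; apply/negP => /eqP E.
    by move: wmax; rewrite (_ : ord_max = j) ?Hj //; apply: val_inj.
  exists (Ordinal jn); first by rewrite inE; rewrite (_ : W _ = j) //; apply: val_inj.
  by apply: val_inj.
have cw' : #|w'| = r.+1.
  by move/eqP: Hw => <-; rewrite -Ew card_imset //; apply: W_inj.
have : 0 < #|w'| by rewrite cw'.
case/card_gt0P => x xw.
set w'' := w' :\ x.
have cw'' : #|w''| = r by move: cw'; rewrite (cardsD1 x w') xw add1n => -[].
have sub : w'' \subset w' by apply: subD1set.
have disj : forall t : {set 'I_n}, [disjoint fext t & w] -> [disjoint t & w''].
  move=> t Dt; apply/pred0P => i /=; apply/negbTE/negP => /andP [it iw].
  have := disjointFr Dt (_ : W i \in fext t); rewrite in_fextW => /(_ it).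
  by move: (subsetP sub i iw); rewrite inE => ->.
apply/or3P; apply: Or33; apply/existsP; exists w''.
apply/andP; split; apply/and3P; split => //.
- by rewrite /kneser_vertex cw''.
- by apply: disj.
- by rewrite /kneser_vertex cw''.
- by rewrite disjoint_sym; apply: disj; rewrite disjoint_sym.
Qed.
End Aux.

Theorem theorem4p5 (n r : nat) :
  0 < n -> 0 < r -> 2 * r + 2 <= n ->
  rho2 n r <= rho2 n.+1 r.+1.
Proof.
move=> _ _ _; apply/bigmax_leqP => P /andP [/forallP V /forallP D].
have -> : #|P| = #|(@fext n) @: P| by rewrite card_imset //; apply: (@fext_inj n).
rewrite /rho2; apply: leq_bigmax_cond.
apply/andP; split.
  apply/forallP => x; apply/implyP => /imsetP [u uP ->].
  by move: (implyP (V u) uP); rewrite /kneser_vertex card_fext => /eqP ->.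
apply/forallP => x; apply/implyP => /imsetP [u uP ->].
apply/forallP => y; apply/implyP => /imsetP [v vP ->].
apply/implyP => neq; apply/negP => H.
have Vu := implyP (V u) uP; have Vv := implyP (V v) vP.
have uv : u != v by apply: contraNneq neq => ->.
move: (implyP (forallP (implyP (D u) uP) v) vP) => /implyP /(_ uv) /negP; apply.
exact: key Vu Vv H.
Qed.
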